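(* Let $\Gamma$ be a discrete group, $\widetilde{\Gamma}=\Gamma\times\Gamma^{\rm op}$, acting on $\Gamma$ by $(g_1,g_2)\cdot y=g_1yg_2$. Let $\widetilde{\Gamma}_1\subseteq\widetilde{\Gamma}$ be the intersection of the stabilizers of an infinite family of distinct elements $(x_n)_n$ of $\Gamma$, assume $\widetilde{\Gamma}_1$ is non-trivial, and fix $x$ in the family $(x_n)_n$. Then: (1) there is a subgroup $\Gamma_1$ of $\Gamma$, depending only on $\widetilde{\Gamma}_1$ and not on the choice of $x$, such that $\widetilde{\Gamma}_1=\{(\gamma_1,x^{-1}\gamma_1^{-1}x)\mid\gamma_1\in\Gamma_1\}$; (2) letting $\mathcal M(\widetilde{\Gamma}_1)=\Gamma_1'$ be the centralizer of $\Gamma_1$ in $\Gamma$ and $\widetilde{\mathcal M}(\widetilde{\Gamma}_1)=\{(\gamma_1,\gamma_2)\mid\gamma_1\in\Gamma_1',\ \gamma_2\in x^{-1}\Gamma_1'x\}$, the orbit $\widetilde{\mathcal M}(\widetilde{\Gamma}_1)x=x(x^{-1}\mathcal M(\widetilde{\Gamma}_1)x)=\Gamma_1'x$ is the set of all elements of $\Gamma$ fixed by $\widetilde{\Gamma}_1$; explicitly, for $\gamma_1,\gamma_2\in\Gamma_1'$ and $m\in\Gamma_1'$, $(\gamma_1,x^{-1}\gamma_2x)\cdot(mx)=\gamma_1m\gamma_2x$; (3) if $\widetilde{\mathcal M}(\widetilde{\Gamma}_1^{\alpha})$, $\widetilde{\mathcal M}(\widetilde{\Gamma}_1^{\beta})$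 are two subgroups constructed as in (2) from non-trivial groups $\widetilde{\Gamma}_1^\alpha,\widetilde{\Gamma}_1^\beta$ of this type with corresponding points $x_\alpha,x_\beta$ fixed by $\widetilde{\Gamma}_1^\alpha$, $\widetilde{\Gamma}_1^\beta$ respectively, and if $\widetilde{\mathcal M}(\widetilde{\Gamma}_1^{\alpha})x_\alpha\cap\widetilde{\mathcal M}(\widetilde{\Gamma}_1^{\beta})x_\beta$ is non-empty, containing an element $m_\alpha\cdot x_\alpha=m_\beta\cdot x_\beta$ with $m_\alpha\in\widetilde{\mathcal M}(\widetilde{\Gamma}_1^{\alpha})$, $m_\beta\in\widetilde{\mathcal M}(\widetilde{\Gamma}_1^{\beta})$, then $$\widetilde{\mathcal M}(\widetilde{\Gamma}_1^{\alpha})x_\alpha\cap\widetilde{\mathcal M}(\widetilde{\Gamma}_1^{\beta})x_\beta=\big(\widetilde{\mathcal M}(\widetilde{\Gamma}_1^{\alpha})\cap\widetilde{\mathcal M}(\widetilde{\Gamma}_1^{\beta})\big)\cdot(m_\varepsilon\cdot x_\varepsilon),\quad\varepsilon=\alpha,\beta.$$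
   Context: $\Gamma^{\rm op}$ is $\Gamma$ with the opposite multiplication, so that $(g_1,g_2)\cdot y=g_1yg_2$ defines a left action of $\Gamma\times\Gamma^{\rm op}$ on $\Gamma$. For a subset $K\subseteq\widetilde{\Gamma}$ and $y\in\Gamma$, $Ky$ denotes $\{k\cdot y\mid k\in K\}$. *)

(* Defs.v *)
From Stdlib Require Import List.

Record is_group {G : Type} (mul : G -> G -> G) (one : G) (inv : G -> G) : Prop := {
  grp_mulA : forall a b c, mul a (mul b c) = mul (mul a b) c;
  grp_mul1g : forall a, mul one a = a;
  grp_mulg1 : forall a, mul a one = a;
  grp_mulVg : forall a, mul (inv a) a = one;
  grp_mulgV : forall a, mul a (inv a) = one }.

Definition is_infinite (I : Type) : Prop :=
  forall l : list I, exists i, ~ In i l.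

Definition injective_fam {I G : Type} (xs : I -> G) : Prop :=
  forall i j, xs i = xs j -> i = j.

Definition set_eq {T : Type} (A B : T -> Prop) : Prop := forall t, A t <-> B t.

Section GroupDefs.
Context {G : Type} (mul : G -> G -> G) (one : G) (inv : G -> G).

Definition act (g : G * G) (y : G) : G := mul (mul (fst g) y) (snd g).

Definition stab_family {I : Type} (xs : I -> G) : G * G -> Prop :=
  fun g => forall i, act g (xs i) = xs i.

Definition nontrivial_sub (K : G * G -> Prop) : Prop :=
  exists g, K g /\ g <> (one, one).

Definition is_subgroup (H : G -> Prop) : Prop :=
  H one /\ (forall a b, H a -> H b -> H (mul a b)) /\ (forall a, H a -> H (inv a)).

(* Gamma_1 : the first projection of tilde-Gamma_1 (depends only on it) *)
Definition first_proj (K : G * G -> Prop) : G -> Prop :=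
  fun c => exists g, K g /\ fst g = c.

Definition centralizer (H : G -> Prop) : G -> Prop :=
  fun m => forall h, H h -> mul m h = mul h m.

Definition Mtilde (H : G -> Prop) (x : G) : G * G -> Prop :=
  fun g => centralizer H (fst g) /\
           exists c, centralizer H c /\ snd g = mul (mul (inv x) c) x.

Definition orbit (K : G * G -> Prop) (y : G) : G -> Prop :=
  fun z => exists k, K k /\ act k y = z.

Definition fixed_points (K : G * G -> Prop) : G -> Prop :=
  fun y => forall k, K k -> act k y = y.

Definition rcoset (H : G -> Prop) (x : G) : G -> Prop :=
  fun y => exists h, H h /\ y = mul h x.

End GroupDefs.

(* Main.v *)
Require Import Defs.

Lemma g_assoc G mul (one:G) inv (HG : is_group mul one inv) a b c :
  mul (mul a b) c = mul a (mul b c).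
Proof. symmetry; apply (grp_mulA _ _ _ HG). Qed.
Lemma g_1l G mul (one:G) inv (HG : is_group mul one inv) a : mul one a = a.
Proof. apply (grp_mul1g _ _ _ HG). Qed.
Lemma g_1r G mul (one:G) inv (HG : is_group mul one inv) a : mul a one = a.
Proof. apply (grp_mulg1 _ _ _ HG). Qed.
Lemma g_Vl G mul (one:G) inv (HG : is_group mul one inv) a : mul (inv a) a = one.
Proof. apply (grp_mulVg _ _ _ HG). Qed.
Lemma g_Vr G mul (one:G) inv (HG : is_group mul one inv) a : mul a (inv a) = one.
Proof. apply (grp_mulgV _ _ _ HG). Qed.
Lemma g_Kl G mul (one:G) inv (HG : is_group mul one inv) a b : mul (inv a) (mul a b) = b.
Proof. rewrite <- (g_assoc _ _ _ _ HG), (g_Vl _ _ _ _ HG), (g_1l _ _ _ _ HG); auto. Qed.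
Lemma g_Kr G mul (one:G) inv (HG : is_group mul one inv) a b : mul a (mul (inv a) b) = b.
Proof. rewrite <- (g_assoc _ _ _ _ HG), (g_Vr _ _ _ _ HG), (g_1l _ _ _ _ HG); auto. Qed.
Lemma g_lcancel G mul (one:G) inv (HG : is_group mul one inv) a b c :
  mul a b = mul a c -> b = c.
Proof. intro H. rewrite <- (g_Kl _ _ _ _ HG a b), H, (g_Kl _ _ _ _ HG); auto. Qed.
Lemma g_rcancel G mul (one:G) inv (HG : is_group mul one inv) a b c :
  mul b a = mul c a -> b = c.
Proof. intro H. rewrite <- (g_1r _ _ _ _ HG b), <- (g_Vr _ _ _ _ HG a), <- (g_assoc _ _ _ _ HG), H,
  (g_assoc _ _ _ _ HG), (g_Vr _ _ _ _ HG), (g_1r _ _ _ _ HG); auto. Qed.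
Lemma g_invmul G mul (one:G) inv (HG : is_group mul one inv) a b :
  inv (mul a b) = mul (inv b) (inv a).
Proof. apply (g_lcancel _ _ _ _ HG (mul a b)). rewrite (g_Vr _ _ _ _ HG).
  rewrite (g_assoc _ _ _ _ HG), (g_Kr _ _ _ _ HG), (g_Vr _ _ _ _ HG); auto. Qed.
Lemma g_invinv G mul (one:G) inv (HG : is_group mul one inv) a : inv (inv a) = a.
Proof. apply (g_lcancel _ _ _ _ HG (inv a)). rewrite (g_Vr _ _ _ _ HG), (g_Vl _ _ _ _ HG); auto. Qed.
Lemma g_inv1 G mul (one:G) inv (HG : is_group mul one inv) : inv one = one.
Proof. rewrite <- (g_1l _ _ _ _ HG (inv one)), (g_Vr _ _ _ _ HG); auto. Qed.

Ltac gnorm HG := repeat (rewrite ?(g_assoc _ _ _ _ HG), ?(g_1l _ _ _ _ HG), ?(g_1r _ _ _ _ HG),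
  ?(g_Vl _ _ _ _ HG), ?(g_Vr _ _ _ _ HG), ?(g_Kl _ _ _ _ HG), ?(g_Kr _ _ _ _ HG),
  ?(g_invmul _ _ _ _ HG), ?(g_invinv _ _ _ _ HG), ?(g_inv1 _ _ _ _ HG)).
Ltac gnormH HG H := repeat (rewrite ?(g_assoc _ _ _ _ HG), ?(g_1l _ _ _ _ HG), ?(g_1r _ _ _ _ HG),
  ?(g_Vl _ _ _ _ HG), ?(g_Vr _ _ _ _ HG), ?(g_Kl _ _ _ _ HG), ?(g_Kr _ _ _ _ HG),
  ?(g_invmul _ _ _ _ HG), ?(g_invinv _ _ _ _ HG), ?(g_inv1 _ _ _ _ HG) in H).

Lemma cent_one G mul (one:G) inv (HG : is_group mul one inv) H : centralizer mul H one.
Proof. intros h _. gnorm HG. reflexivity. Qed.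
Lemma cent_mul G mul (one:G) inv (HG : is_group mul one inv) H a b :
  centralizer mul H a -> centralizer mul H b -> centralizer mul H (mul a b).
Proof. intros Ha Hb h Hh. rewrite (g_assoc _ _ _ _ HG), Hb by exact Hh.
  rewrite <- (g_assoc _ _ _ _ HG), Ha by exact Hh. gnorm HG. reflexivity. Qed.
Lemma cent_inv G mul (one:G) inv (HG : is_group mul one inv) H a :
  centralizer mul H a -> centralizer mul H (inv a).
Proof. intros Ha h Hh. apply (g_lcancel _ _ _ _ HG a). gnorm HG.
  rewrite <- (g_assoc _ _ _ _ HG a h), Ha by exact Hh. gnorm HG. reflexivity. Qed.
Lemma cent_r G mul (one:G) inv (HG : is_group mul one inv) H a h r :
  centralizer mul H a -> H h -> mul a (mul h r) = mul h (mul a r).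
Proof. intros Ha Hh. rewrite <- !(g_assoc _ _ _ _ HG), Ha by exact Hh. reflexivity. Qed.

Lemma orbitM G mul (one:G) inv (HG : is_group mul one inv) H x y :
  orbit mul (Mtilde mul inv H x) x y <-> exists m, centralizer mul H m /\ y = mul m x.
Proof. split.
- intros [[k1 k2] [[Hk1 [c [Hc Ek]]] E]]. simpl in *. subst. exists (mul k1 c).
  split. apply (cent_mul _ _ _ _ HG); auto. unfold act; simpl. gnorm HG. reflexivity.
- intros [m [Hm ->]]. exists (m, mul (mul (inv x) one) x). split.
  + split; simpl; auto. exists one; split; auto. apply (cent_one _ _ _ _ HG).
  + unfold act; simpl. gnorm HG. reflexivity.
Qed.

Lemma part3 G mul (one:G) inv (HG : is_group mul one inv) H1 H2 xa xb z :
  orbit mul (Mtilde mul inv H1 xa) xa z -> orbit mul (Mtilde mul inv H2 xb) xb z ->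
  set_eq (fun y => orbit mul (Mtilde mul inv H1 xa) xa y /\ orbit mul (Mtilde mul inv H2 xb) xb y)
    (orbit mul (fun k => Mtilde mul inv H1 xa k /\ Mtilde mul inv H2 xb k) z).
Proof.
  rewrite !(orbitM _ _ _ _ HG). intros [u [Hu Eu]] [v [Hv Ev]] y. split.
- rewrite !(orbitM _ _ _ _ HG). intros [[u' [Hu' Eu']] [v' [Hv' Ev']]].
  exists (one, mul (inv z) y). split; [split; split|].
  + apply (cent_one _ _ _ _ HG).
  + exists (mul (inv u) u'). split.
    * apply (cent_mul _ _ _ _ HG); auto. apply (cent_inv _ _ _ _ HG); auto.
    * simpl. rewrite Eu at 1. rewrite Eu'. gnorm HG. reflexivity.
  + apply (cent_one _ _ _ _ HG).
  + exists (mul (inv v) v'). split.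
    * apply (cent_mul _ _ _ _ HG); auto. apply (cent_inv _ _ _ _ HG); auto.
    * simpl. rewrite Ev at 1. rewrite Ev'. gnorm HG. reflexivity.
  + unfold act; simpl. gnorm HG. reflexivity.
- intros [[k1 k2] [[[Ha1 [c [Hc Ec]]] [Hb1 [d [Hd Ed]]]] E]]. simpl in *.
  rewrite !(orbitM _ _ _ _ HG). split.
  + exists (mul k1 (mul u c)). split.
    * repeat apply (cent_mul _ _ _ _ HG); auto.
    * subst y. unfold act; simpl. rewrite Eu, Ec. gnorm HG. reflexivity.
  + exists (mul k1 (mul v d)). split.
    * repeat apply (cent_mul _ _ _ _ HG); auto.
    * subst y. unfold act; simpl. rewrite Ev, Ed. gnorm HG. reflexivity.
Qed.
Theorem proposition5 (G : Type) (mul : G -> G -> G) (one : G) (inv : G -> G)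
  (HG : is_group mul one inv) :
  (* parts (1) and (2) *)
  (forall (I : Type) (xs : I -> G),
     is_infinite I -> injective_fam xs ->
     nontrivial_sub one (stab_family mul xs) ->
     let Gt1 := stab_family mul xs in
     let Gam1 := first_proj Gt1 in
     let M := centralizer mul Gam1 in
     is_subgroup mul one inv Gam1 /\
     (forall i, set_eq Gt1
        (fun g => exists c, Gam1 c /\ g = (c, mul (mul (inv (xs i)) (inv c)) (xs i)))) /\
     (forall i, let x := xs i in
        set_eq (orbit mul (Mtilde mul inv Gam1 x) x) (rcoset mul M x) /\
        set_eq (fun y => exists m, M m /\ y = mul x (mul (mul (inv x) m) x))
               (rcoset mul M x) /\
        set_eq (fixed_points mul Gt1) (rcoset mul M x) /\
        (forall g1 g2 m, M g1 -> M g2 -> M m ->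
           act mul (g1, mul (mul (inv x) g2) x) (mul m x)
           = mul (mul (mul g1 m) g2) x)))
  /\
  (* part (3) *)
  (forall (Ia : Type) (xa : Ia -> G) (Ib : Type) (xb : Ib -> G),
     is_infinite Ia -> injective_fam xa -> nontrivial_sub one (stab_family mul xa) ->
     is_infinite Ib -> injective_fam xb -> nontrivial_sub one (stab_family mul xb) ->
     forall (ia : Ia) (ib : Ib),
     let Ma := Mtilde mul inv (first_proj (stab_family mul xa)) (xa ia) in
     let Mb := Mtilde mul inv (first_proj (stab_family mul xb)) (xb ib) in
     forall ma mb, Ma ma -> Mb mb -> act mul ma (xa ia) = act mul mb (xb ib) ->
     set_eq (fun y => orbit mul Ma (xa ia) y /\ orbit mul Mb (xb ib) y)
            (orbit mul (fun k => Ma k /\ Mb k) (act mul ma (xa ia))) /\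
     set_eq (fun y => orbit mul Ma (xa ia) y /\ orbit mul Mb (xb ib) y)
            (orbit mul (fun k => Ma k /\ Mb k) (act mul mb (xb ib)))).
Proof.
split.
- intros I xs _ _ _ Gt1 Gam1 M.
  assert (K : forall g1 g2, Gt1 (g1, g2) -> forall i, g2 = mul (mul (inv (xs i)) (inv g1)) (xs i)).
  { intros g1 g2 Hg i. specialize (Hg i). unfold act in Hg; simpl in *.
    apply (g_lcancel _ _ _ _ HG (mul g1 (xs i))). gnormH HG Hg. gnorm HG. exact Hg. }
  assert (SG : is_subgroup mul one inv Gam1).
  { split; [|split].
    - exists (one, one). split; [intro i; unfold act; simpl; gnorm HG; reflexivity | reflexivity].
    - intros a b [[a1 a2] [Ha Ea]] [[b1 b2] [Hb Eb]]. simpl in *. subst a; try subst b.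
      exists (mul a1 b1, mul b2 a2). split; [|reflexivity]. intro j. unfold act; simpl.
      rewrite (K _ _ Ha j), (K _ _ Hb j). simpl. gnorm HG. reflexivity.
    - intros a [[a1 a2] [Ha Ea]]. simpl in *. subst a; try subst b.
      exists (inv a1, inv a2). split; [|reflexivity]. intro j. unfold act; simpl.
      rewrite (K _ _ Ha j). simpl. gnorm HG. reflexivity. }
  split; [exact SG|split].
  + intros i [t1 t2]. split.
    * intro Ht. exists t1. split. exists (t1, t2); auto. rewrite (K _ _ Ht i). reflexivity.
    * intros [c [[[c1 d] [Hc Ec]] E]]. simpl in *. subst. injection E as -> ->.
      rewrite (K _ _ Hc i) in Hc. exact Hc.
  + intros i x. split; [|split; [|split]].
    * intro y. rewrite (orbitM _ _ _ _ HG). reflexivity.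
    * intro y. split; intros [m [Hm E]]; exists m; split; auto; subst; gnorm HG; reflexivity.
    * intro y. split.
      -- intro Hy. exists (mul y (inv x)). split; [|gnorm HG; reflexivity].
         intros h [[h1 h2] [Hh Eh]]. simpl in *. subst h1.
         pose proof (Hy _ Hh) as E. unfold act in E; simpl in E. rewrite (K _ _ Hh i) in E.
         simpl in E. gnormH HG E. rewrite <- E at 1. fold x. gnorm HG. reflexivity.
      -- intros [m [Hm ->]] [k1 k2] Hk. unfold act; simpl. rewrite (K _ _ Hk i). simpl. fold x.
         gnorm HG. rewrite (cent_r _ _ _ _ HG Gam1 m (inv k1)); auto.
         ++ gnorm HG. reflexivity.
         ++ apply SG. exists (k1, k2); auto.
    * intros g1 g2 m _ _ _. unfold act; simpl. gnorm HG. reflexivity.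
- intros Ia xa Ib xb _ _ _ _ _ _ ia ib Ma Mb ma mb Hma Hmb E.
  assert (Oa : orbit mul Ma (xa ia) (act mul ma (xa ia))) by (exists ma; auto).
  assert (Ob : orbit mul Mb (xb ib) (act mul ma (xa ia))) by (exists mb; auto).
  split.
  + apply (part3 _ _ _ _ HG); auto.
  + rewrite <- E. apply (part3 _ _ _ _ HG); auto.
Qed.
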